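(* Let $Y'\subseteq Y$ and $Z'\subseteq Z$ and let $f\in\mathbb{F}[Y',Z']$. Let $a=\min\{|Y'|,|Z'|\}$. Then $\mathrm{maxrank}(M_f)\le 2^a$.
   Context: $\mathbb{F}$ is a field, $Y=\{y_1,\dots,y_m\}$ and $Z=\{z_1,\dots,z_m\}$ are disjoint sets of variables. For $f\in\mathbb{F}[Y,Z]$, the polynomial coefficient matrix $M_f$ is the $2^m\times 2^m$ matrix with entries in $\mathbb{F}[Y,Z]$, rows indexed by monic multilinear monomials $p$ in $Y$ and columns by monic multilinear monomials $q$ in $Z$, where $M_f(p,q)=G$ if and only if $f$ can be uniquely written as $f=pq\,G+Q$ with $G,Q\in\mathbb{F}[Y,Z]$ such that $G$ contains no variable other than those present in $p$ and $q$, and $Q$ has no monomial which is divisible by $pq$ and contains only variables present in $p$ and $q$. For $S:Y\cup Z\to\mathbb{F}$, $M_f|_S$ is obtained by evaluating each entry at $S$, and $\mathrm{maxrank}(M_f)=\max_S\mathrm{rank}(M_f|_S)$. *)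

(* Defs.v *)
From HB Require Import structures.
From mathcomp Require Import all_boot all_order all_algebra.
From mathcomp Require Import mpoly.
Set Implicit Arguments. Unset Strict Implicit. Unset Printing Implicit Defensive.
Import Order.TTheory GRing.Theory.
Local Open Scope ring_scope.

Definition yvar (m : nat) (i : 'I_m) : 'I_(m + m) := lshift m i.
Definition zvar (m : nat) (j : 'I_m) : 'I_(m + m) := rshift m j.

(* The set of variables Y_P u Z_Q (P indexes a subset of Y, Q of Z).
   A monic multilinear monomial p in Y is identified with its set of
   variables P, likewise q in Z with Q. *)
Definition vars_of (m : nat) (P Q : {set 'I_m}) : {set 'I_(m + m)} :=
  (@yvar m @: P) :|: (@zvar m @: Q).

Definition mnm_supp (n : nat) (mu : 'X_{1..n}) : {set 'I_n} :=
  [set k | mu k != 0%N].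

Definition ind_mnm (n : nat) (V : {set 'I_n}) : 'X_{1..n} :=
  [multinom (nat_of_bool (k \in V)) | k < n].

Definition poly_in_vars (F : fieldType) (n : nat) (f : {mpoly F[n]})
    (V : {set 'I_n}) : Prop :=
  forall mu, mu \in msupp f -> mnm_supp mu \subset V.

(* Entry M_f(p,q) = G, where f = p q G + Q: the terms of f whose monomial
   contains exactly the variables of p and q, divided by p q. *)
Definition pcm_entry (F : fieldType) (m : nat) (f : {mpoly F[m + m]})
    (P Q : {set 'I_m}) : {mpoly F[m + m]} :=
  \sum_(mu <- msupp f | mnm_supp mu == vars_of P Q)
     f@_mu *: 'X_[(mu - ind_mnm (vars_of P Q))%MM].

(* Polynomial coefficient matrix M_f, rows/columns indexed (via enum) by
   subsets of Y resp. Z, i.e. by monic multilinear monomials; size 2^m. *)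
Definition pcm (F : fieldType) (m : nat) (f : {mpoly F[m + m]}) :
    'M[{mpoly F[m + m]}]_(#|{set 'I_m}|, #|{set 'I_m}|) :=
  \matrix_(i, j) pcm_entry f (enum_val i) (enum_val j).

Definition pcm_eval (F : fieldType) (m : nat) (f : {mpoly F[m + m]})
    (S : 'I_(m + m) -> F) : 'M[F]_(#|{set 'I_m}|, #|{set 'I_m}|) :=
  map_mx (fun g => g.@[S]) (pcm f).

(* Main.v *)
Require Import Defs.
From HB Require Import structures.
From mathcomp Require Import all_boot all_order all_algebra.
From mathcomp Require Import mpoly.
From mathcomp Require Import zify.
Set Implicit Arguments. Unset Strict Implicit. Unset Printing Implicit Defensive.
Import GRing.Theory.
Local Open Scope ring_scope.

Lemma rank_rows (F : fieldType) n p (A : 'M[F]_(n, p)) (R : {set 'I_n}) :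
  (forall i j, i \notin R -> A i j = 0) -> (\rank A <= #|R|)%N.
Proof.
move=> HA.
pose M : 'M[F]_(n, #|R|) := \matrix_(i, k) (i == enum_val k)%:R.
pose N : 'M[F]_(#|R|, p) := \matrix_(k, j) A (enum_val k) j.
have -> : A = M *m N.
  apply/matrixP=> i j; rewrite !mxE.
  case: (boolP (i \in R)) => Hi.
    rewrite (bigD1 (enum_rank_in Hi i)) //= !mxE enum_rankK_in // eqxx mul1r.
    rewrite big1 ?addr0 // => k Hk; rewrite !mxE.
    case: eqP => [Ei|]; last by rewrite mul0r.
    by case/eqP: Hk; apply: enum_val_inj; rewrite enum_rankK_in.
  rewrite HA // big1 // => k _; rewrite !mxE.
  case: eqP => [Ei|]; last by rewrite mul0r.
  by move: Hi; rewrite Ei enum_valP.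
exact: mulmx_max_rank.
Qed.

Lemma yvar_in m (Y' Z' : {set 'I_m}) i : yvar i \in vars_of Y' Z' -> i \in Y'.
Proof.
rewrite /vars_of inE => /orP[/imsetP[k Hk E]|/imsetP[k Hk E]].
  by move/lshift_inj: E => ->.
by move: E => /(congr1 val) /=; move: (ltn_ord i) => ? ?; lia.
Qed.

Lemma zvar_in m (Y' Z' : {set 'I_m}) i : zvar i \in vars_of Y' Z' -> i \in Z'.
Proof.
rewrite /vars_of inE => /orP[/imsetP[k Hk E]|/imsetP[k Hk E]].
  by move: E => /(congr1 val) /=; move: (ltn_ord k) => ? ?; lia.
by move/rshift_inj: E => ->.
Qed.

Lemma entry0 (F : fieldType) m (Y' Z' P Q : {set 'I_m}) (f : {mpoly F[m + m]}) :
  poly_in_vars f (vars_of Y' Z') -> ~~ (P \subset Y') || ~~ (Q \subset Z') ->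
  pcm_entry f P Q = 0.
Proof.
move=> Hf HPQ; rewrite /pcm_entry big_seq_cond big1 // => mu /andP[Hmu /eqP E].
move: (Hf mu Hmu); rewrite E => Hsub; exfalso; move: HPQ => /orP[] /negP; apply.
  apply/subsetP=> i Hi; apply: (yvar_in (Z':=Z')); apply: (subsetP Hsub).
  by rewrite /vars_of inE imset_f.
apply/subsetP=> i Hi; apply: (zvar_in (Y':=Y')); apply: (subsetP Hsub).
by rewrite /vars_of inE imset_f ?orbT.
Qed.

Lemma card_sub m (Y' : {set 'I_m}) :
  (#|[set i : 'I_#|{set 'I_m}| | enum_val i \subset Y']| <= 2 ^ #|Y'|)%N.
Proof.
rewrite -card_powerset -(card_imset _ enum_val_inj).
apply: subset_leq_card; apply/subsetP=> _ /imsetP[i Hi ->].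
by rewrite inE in Hi; rewrite powersetE.
Qed.

Theorem proposition1 (F : fieldType) (m : nat) (Y' Z' : {set 'I_m})
    (f : {mpoly F[m + m]}) :
  poly_in_vars f (vars_of Y' Z') ->
  forall S : 'I_(m + m) -> F,
    (\rank (pcm_eval f S) <= 2 ^ minn #|Y'| #|Z'|)%N.
Proof.
move=> Hf S.
have H1 : (\rank (pcm_eval f S) <= 2 ^ #|Y'|)%N.
  apply: leq_trans (card_sub Y'); apply: rank_rows => i j.
  rewrite inE => Hi; rewrite /pcm_eval !mxE (entry0 Hf) ?meval0 //.
  by rewrite Hi.
have H2 : (\rank (pcm_eval f S) <= 2 ^ #|Z'|)%N.
  rewrite -mxrank_tr.
  apply: leq_trans (card_sub Z'); apply: rank_rows => i j.
  rewrite inE => Hi; rewrite /pcm_eval !mxE (entry0 Hf) ?meval0 //.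
  by rewrite Hi orbT.
rewrite /minn; by case: (ltnP #|Y'| #|Z'|) => H.
Qed.
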